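(* In the discrete torus model with frame group $\mathbb{Z}_2\times\mathbb{Z}_2$ and the 2-dimensional calculus $\mathcal C=\{\overline{10},\overline{01}\}$ (context), the torsion-free and cotorsion-free spin connections are exactly \[A_{\overline{10}}=a\,e_1-\tfrac{s_2}{2}e_2,\qquad A_{\overline{01}}=-\tfrac{s_1}{2}e_1+b\,e_2\] for arbitrary functions $a,b$, where $s_1=\bar\partial^2\Theta_1$, $s_2=\bar\partial^1\Theta_2$. The covariant derivative is $\nabla e_1=2a\,e_1\otimes e_1-s_2\,e_2\otimes e_1$, $\nabla e_2=-s_1\,e_1\otimes e_2+2b\,e_2\otimes e_2$, and such a connection is regular if and only if $a\,\bar\partial^1b-b\,\bar\partial^2a=0$ (equivalently $aR_1b-bR_2a=0$).
   Context: Discrete torus model: $\Sigma=\mathbb{Z}_2\times\mathbb{Z}_2$, $x\to y$ iff $y-x\in\{(1,0),(0,1)\}$; diagonal zweibein $e_{1,x,x+(1,0)}=\Theta_1(x)^{-1}$, $e_{2,x,x+(0,1)}=\Theta_2(x)^{-1}$, $\Theta_a$ nowhere-vanishing with $\Theta_1R_1\Theta_2=\Theta_2R_2\Theta_1$; $R_1f(x)=f(x+(1,0))$, $R_2f(x)=f(x+(0,1))$, $\bar\partial^a=R_a-\mathrm{id}$; $e_af=R_a(f)e_a$, $\mathrm{d}f=\sum_a(\bar\partial^af)\Theta_ae_a$; two-forms $e_1\wedge e_2=-e_2\wedge e_1$, $e_a\wedge e_a=0$; $\mathrm{d}e_1=(\bar\partial^1\Theta_2)e_1\wedge e_2$, $\mathrm{d}e_2=-(\bar\partial^2\Theta_1)e_1\wedge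 e_2$. Frame group $\mathbb{Z}_2\times\mathbb{Z}_2=\{\overline{00},\overline{10},\overline{01},\overline{11}\}$ with calculus $\mathcal C=\{\overline{10},\overline{01}\}$, $f^{\overline{10}}\triangleright e_1=-2e_1$, $f^{\overline{10}}\triangleright e_2=0$, $f^{\overline{01}}\triangleright e_1=0$, $f^{\overline{01}}\triangleright e_2=-2e_2$. Spin connection: 1-forms $A_{\overline{10}},A_{\overline{01}}$. Torsion-free: $\mathrm{d}e_a+\sum_iA_i\wedge(f^i\triangleright e_a)=0$; cotorsion-free: $\mathrm{d}e_a+\sum_i(f^i\triangleright e_a)\wedge A_i=0$; regular: $A_{\overline{10}}\wedge A_{\overline{01}}+A_{\overline{01}}\wedge A_{\overline{10}}=0$. Covariant derivative $\nabla(\sum\alpha^ae_a)=\sum\mathrm{d}\alpha^a\otimes e_a-\sum_{i,a}\alpha^aA_i\otimes f^i\triangleright e_a$. *)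

(* Defs.v *)
From HB Require Import structures.
From mathcomp Require Import all_boot all_order all_algebra.
Set Implicit Arguments. Unset Strict Implicit. Unset Printing Implicit Defensive.
Import GRing.Theory.
Local Open Scope ring_scope.

Definition Sigma : Type := ('Z_2 * 'Z_2)%type.

Inductive dir := D1 | D2.

Section Model.
Variable K : fieldType.

Definition fn := Sigma -> K.

Definition Rsh (a : dir) (f : fn) : fn :=
  match a with
  | D1 => fun x => f (x.1 + 1, x.2)
  | D2 => fun x => f (x.1, x.2 + 1)
  end.

Definition dbar (a : dir) (f : fn) : fn := fun x => Rsh a f x - f x.

(* One-forms, written uniquely as sum_a alpha^a e_a (coefficients on the left). *)
Definition oneform := dir -> fn.
(* Two-forms: multiples f e_1 /\ e_2. *)
Definition twoform := fn.
(* Elements of Omega^1 (x) Omega^1: sum_{c,b} T c b e_c (x) e_b. *)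
Definition tensor := dir -> dir -> fn.

Definition e (a : dir) : oneform :=
  fun b _ => match a, b with D1, D1 | D2, D2 => 1 | _, _ => 0 end.

Definition lmul (f : fn) (w : oneform) : oneform := fun b x => f x * w b x.

(* wedge product, using e_a f = R_a(f) e_a, e_a/\e_a = 0, e_2/\e_1 = -e_1/\e_2 *)
Definition wedge (w v : oneform) : twoform :=
  fun x => w D1 x * Rsh D1 (v D2) x - w D2 x * Rsh D2 (v D1) x.

(* tensor product over the algebra, using e_c f = R_c(f) e_c *)
Definition tens (w v : oneform) : tensor :=
  fun c b x => w c x * Rsh c (v b) x.

Definition dfun (Theta : dir -> fn) (f : fn) : oneform :=
  fun a x => dbar a f x * Theta a x.

Definition de (Theta : dir -> fn) (a : dir) : twoform :=
  match a with
  | D1 => dbar D1 (Theta D2)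
  | D2 => fun x => - dbar D2 (Theta D1) x
  end.

Inductive calc := C10 | C01.

(* f^i |> e_a = act i a * e_a *)
Definition act (i : calc) (a : dir) : K :=
  match i, a with C10, D1 | C01, D2 => -2 | _, _ => 0 end.

Definition act_form (i : calc) (a : dir) : oneform :=
  fun b x => act i a * e a b x.

Definition connection := calc -> oneform.

Definition torsion_free (Theta : dir -> fn) (A : connection) : Prop :=
  forall a x, de Theta a x + wedge (A C10) (act_form C10 a) x
                           + wedge (A C01) (act_form C01 a) x = 0.

Definition cotorsion_free (Theta : dir -> fn) (A : connection) : Prop :=
  forall a x, de Theta a x + wedge (act_form C10 a) (A C10) x
                           + wedge (act_form C01 a) (A C01) x = 0.

Definition regular (A : connection) : Prop :=
  forall x, wedge (A C10) (A C01) x + wedge (A C01) (A C10) x = 0.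

(* nabla (sum_a alpha^a e_a) = sum_a d alpha^a (x) e_a
                              - sum_{i,a} alpha^a A_i (x) (f^i |> e_a) *)
Definition nabla (Theta : dir -> fn) (A : connection) (w : oneform) : tensor :=
  fun c b x =>
    (tens (dfun Theta (w D1)) (e D1) c b x + tens (dfun Theta (w D2)) (e D2) c b x)
    - (tens (lmul (w D1) (A C10)) (act_form C10 D1) c b x
       + tens (lmul (w D2) (A C10)) (act_form C10 D2) c b x
       + tens (lmul (w D1) (A C01)) (act_form C01 D1) c b x
       + tens (lmul (w D2) (A C01)) (act_form C01 D2) c b x).

Definition mkform (f g : fn) : oneform :=
  fun b => match b with D1 => f | D2 => g end.

Definition spin_conn (Theta : dir -> fn) (a b : fn) : connection :=
  fun i => match i with
  | C10 => mkform a (fun x => - dbar D1 (Theta D2) x / 2)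
  | C01 => mkform (fun x => - dbar D2 (Theta D1) x / 2) b
  end.

End Model.

(* Main.v *)
Require Import Defs.
From HB Require Import structures.
From mathcomp Require Import all_boot all_order all_algebra.
From mathcomp Require Import ring.
Import GRing.Theory.
Local Open Scope ring_scope.

Lemma add11 (z : 'Z_2) : z + 1 + 1 = z.
Proof. by case: z => [[|[|m]]] //= Hm; apply: val_inj. Qed.

Lemma solve2 {K : fieldType} {y c E : K} : (2 : K) != 0 ->
  E = c + y * 2 -> E = 0 -> y = - c / 2.
Proof.
move=> H2 -> h; apply: (mulIf H2); rewrite mulrVK ?unitfE //.
by apply/eqP; rewrite -subr_eq0 opprK addrC h.
Qed.

Lemma solve2' {K : fieldType} {y c E : K} : (2 : K) != 0 ->
  E = - (c + y * 2) -> E = 0 -> y = - c / 2.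
Proof.
move=> H2 -> h; apply: (solve2 H2 (erefl _)); by rewrite -oppr0 -h opprK.
Qed.

Theorem proposition4p11 (K : fieldType) (Theta : dir -> fn K)
  (H2 : (2 : K) != 0)
  (Hnz : forall a x, Theta a x != 0)
  (Hcomp : forall x, Theta D1 x * Rsh D1 (Theta D2) x
                     = Theta D2 x * Rsh D2 (Theta D1) x) :
  let s1 := dbar D2 (Theta D1) in
  let s2 := dbar D1 (Theta D2) in
  (forall A : connection K,
     (torsion_free Theta A /\ cotorsion_free Theta A) <->
     (exists a b : fn K, forall i d x, A i d x = spin_conn Theta a b i d x))
  /\
  (forall a b : fn K,
     let A := spin_conn Theta a b in
     (forall c d x, nabla Theta A (e K D1) c d x
        = 2 * a x * tens (e K D1) (e K D1) c d x
          - s2 x * tens (e K D2) (e K D1) c d x)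
     /\ (forall c d x, nabla Theta A (e K D2) c d x
        = - s1 x * tens (e K D1) (e K D2) c d x
          + 2 * b x * tens (e K D2) (e K D2) c d x)
     /\ (regular A <-> forall x, a x * dbar D1 b x - b x * dbar D2 a x = 0)
     /\ (regular A <-> forall x, a x * Rsh D1 b x - b x * Rsh D2 a x = 0)).
Proof.
move=> s1 s2; split.
  move=> A; split.
    move=> [HT HC]; exists (A C10 D1), (A C01 D2).
    case=> [] [] x //=.
      apply: (solve2 H2 _ (HT D1 x)).
      by rewrite /de /wedge /act_form /= /s2; ring.
    apply: (solve2' H2 _ (HT D2 x)).
    by rewrite /de /wedge /act_form /= /s2; ring.
  move=> [a [b Heq]]; split=> d [x1 x2];
    rewrite /de /wedge /act_form; case: d => /=; rewrite ?Heq /= /dbar /= ?add11;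
    field; exact: H2.
move=> a b A; split; last split.
- by case=> [] [] x; rewrite /nabla /tens /dfun /lmul /act_form /dbar /= /s2; field; exact: H2.
- by case=> [] [] x; rewrite /nabla /tens /dfun /lmul /act_form /dbar /= /s1; field; exact: H2.
have E : forall x, wedge (A C10) (A C01) x + wedge (A C01) (A C10) x
   = a x * Rsh D1 b x - b x * Rsh D2 a x.
  move=> [x1 x2]; rewrite /wedge /A /= /dbar /= !add11; field; exact: H2.
have F : forall x, a x * dbar D1 b x - b x * dbar D2 a x
   = a x * Rsh D1 b x - b x * Rsh D2 a x by move=> x; rewrite /dbar; ring.
split; split=> h x.
- by rewrite F -E.
- by rewrite E -F.
- by rewrite -E.
- by rewrite E.
Qed.
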